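(* Let $A$ be an $n\times n$ irreducible nonnegative matrix with largest eigenvalue $1$ and positive $w$ with $Aw=w$, $A^Tw=w$, and let $\tilde A=\frac12(A+A^T)$. Then for every nonempty $U\subsetneq[n]$ and every $b\in\mathbb R^{|U|}$, \[ \operatorname{cap}_{U,b}(\tilde A)\le\operatorname{cap}_{U,b}(A). \]
   Context: For an irreducible nonnegative $n\times n$ matrix $B$ with PF eigenvalue $1$ and a positive vector $w$ with $Bw=w$, $B^Tw=w$, set $L=I-B$. For nonempty $U\subsetneq[n]$ and $b\in\mathbb R^{|U|}$ (indexed by $U$), there is a unique $q\in\mathbb R^n$ with $q_i=w_ib_i$ for $i\in U$ and $(Lq)_i=0$ for $i\notin U$; the capacity is $\operatorname{cap}_{U,b}(B)=\langle q,Lq\rangle$. *)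

(* Defs.v *)
From HB Require Import structures.
From mathcomp Require Import all_boot all_order all_algebra.
From mathcomp.real_closed Require Import complex.
Set Implicit Arguments. Unset Strict Implicit. Unset Printing Implicit Defensive.
Import Order.TTheory GRing.Theory Num.Theory.
Local Open Scope ring_scope.

Definition nonneg_mx (R : numDomainType) n (A : 'M[R]_n) : Prop :=
  forall i j, 0 <= A i j.

(* irreducible (nonnegative) matrix: its digraph is strongly connected,
   i.e. for all i j there is k with (A^k)_{ij} > 0 *)
Definition irreducible_mx (R : numDomainType) n (A : 'M[R]_n) : Prop :=
  forall i j : 'I_n, exists k : nat, 0 < (A ^+ k) i j.

(* the largest (Perron-Frobenius) eigenvalue of A is 1: 1 is an eigenvalue
   and every complex eigenvalue has modulus at most 1 *)
Definition PF_eigenvalue_one (R : rcfType) n (A : 'M[R]_n) : Prop :=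
  root (char_poly A) 1 /\
  forall z : R[i], root (char_poly (map_mx (fun x : R => (x%:C)%C) A)) z ->
    `|z| <= 1.

Definition pos_vec (R : numDomainType) n (w : 'cV[R]_n) : Prop :=
  forall i, 0 < w i 0.

Definition cap_vec (R : numDomainType) n (B : 'M[R]_n) (w : 'cV[R]_n)
  (U : {set 'I_n}) (b : 'cV[R]_n) (q : 'cV[R]_n) : Prop :=
  (forall i, i \in U -> q i 0 = w i 0 * b i 0) /\
  (forall i, i \notin U -> ((1%:M - B) *m q) i 0 = 0).

Definition cap_value (R : numDomainType) n (B : 'M[R]_n) (q : 'cV[R]_n) : R :=
  \sum_i q i 0 * ((1%:M - B) *m q) i 0.

Definition sym_part (R : numFieldType) n (A : 'M[R]_n) : 'M[R]_n :=
  2^-1 *: (A + A^T).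

(* Main.v *)
Require Import Defs.
From HB Require Import structures.
From mathcomp Require Import all_boot all_order all_algebra.
From mathcomp.real_closed Require Import complex.
From mathcomp Require Import ring lra.
Import Order.TTheory GRing.Theory Num.Theory.
Local Open Scope ring_scope.

Section Cap.
Variable R : rcfType.
Variable n : nat.

Lemma path_closed (A : 'M[R]_n) (S : {set 'I_n}) :
  (forall i j, i \in S -> A i j != 0 -> j \in S) ->
  forall k i j, i \in S -> (A ^+ k) i j != 0 -> j \in S.
Proof.
move=> HS; elim=> [|k IH] i j Hi.
  rewrite expr0 -idmxE mxE; have [<- //|_] := eqVneq i j; by rewrite eqxx.
rewrite exprSr -mulmxE mxE => Hs.
case: (pickP (fun l => (A ^+ k) i l * A l j != 0)) => [l /= Hl | H0].
  rewrite mulf_eq0 negb_or in Hl; case/andP: Hl => H1 H2.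
  exact: (HS l j (IH i l Hi H1) H2).
move: Hs; rewrite big1 ?eqxx // => l _; by move: (H0 l) => /= /negbFE/eqP.
Qed.

Lemma kernel0 (A B : 'M[R]_n) (w : 'cV[R]_n) (U : {set 'I_n}) (v : 'cV[R]_n) :
  nonneg_mx A -> (forall i j, 0 < A i j -> 0 < B i j) -> irreducible_mx A ->
  nonneg_mx B -> pos_vec w -> B *m w = w -> U != set0 ->
  (forall i, i \in U -> v i 0 = 0) ->
  (forall i, i \notin U -> ((1%:M - B) *m v) i 0 = 0) -> v = 0.
Proof.
move=> nnA AB irrA nnB pw Bw U0 vU vW.
have [u Hu] : exists u, u \in U by case/set0Pn: U0 => u Hu; exists u.
pose y i := `|v i 0| / w i 0.
have y0 i : 0 <= y i by rewrite /y divr_ge0 // ltW.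
have [i1 _ Hmax] := @arg_maxP _ _ 'I_n u xpredT y isT.
pose M := y i1.
have HM : M = 0.
  apply/eqP; apply/negPn/negP => HM0.
  have Mpos : 0 < M by rewrite lt_def HM0 y0.
  pose S := [set i | y i == M].
  have SU i : i \in S -> i \notin U.
    rewrite inE => /eqP Hy; apply/negP => Hi.
    by move: Hy; rewrite /y vU // normr0 mul0r => /esym/eqP; rewrite (negbTE HM0).
  have clos i j : i \in S -> A i j != 0 -> j \in S.
    move=> iS Aij.
    have Bij : 0 < B i j by apply: AB; rewrite lt_def Aij nnA.
    have vi : v i 0 = \sum_j0 B i j0 * v j0 0.
      move: (vW i (SU i iS)); rewrite mulmxBl mul1mx !mxE.
      by move/eqP; rewrite subr_eq0 => /eqP.
    have wi : w i 0 = \sum_j0 B i j0 * w j0 0.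
      by rewrite -{1}Bw mxE.
    have yiM : `|v i 0| = M * w i 0.
      move: iS; rewrite inE /y => /eqP <-; rewrite divfK //.
      by rewrite gt_eqF // pw.
    pose F j0 := B i j0 * w j0 0 * (M - y j0).
    have F0 j0 : 0 <= F j0.
      apply: mulr_ge0; [apply: mulr_ge0; [exact: nnB | exact: ltW (pw _)] | rewrite subr_ge0; exact: Hmax].
    have Fs : \sum_j0 F j0 = M * w i 0 - \sum_j0 B i j0 * `|v j0 0|.
      rewrite {1}wi mulr_sumr -sumrB; apply: eq_bigr => j0 _.
      have wj := pw j0; rewrite /F /y; field; exact: lt0r_neq0.
    have Fle : \sum_j0 F j0 <= 0.
      rewrite Fs subr_le0 -yiM vi; apply: le_trans (ler_norm_sum _ _ _) _.
      by apply: ler_sum => j0 _; rewrite normrM ger0_norm ?nnB.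
    have Fj : F j = 0.
      apply: (psumr_eq0P (P := xpredT)) => // ; apply/eqP; rewrite eq_le Fle.
      by rewrite sumr_ge0.
    move: Fj; rewrite /F => /eqP; rewrite !mulf_eq0 (gt_eqF Bij) (gt_eqF (pw j)) /=.
    by rewrite subr_eq0 inE eq_sym.
  have i1S : i1 \in S by rewrite inE.
  have [k Hk] := irrA i1 u.
  by move: (SU u (@path_closed A S clos k i1 u i1S (lt0r_neq0 Hk))); rewrite Hu.
apply/matrixP => i j; rewrite ord1 mxE.
have yle := Hmax i isT; rewrite -/M HM in yle.
have : y i = 0 by apply/eqP; rewrite eq_le y0 andbT; exact: yle.
rewrite /y => /eqP; rewrite mulf_eq0 invr_eq0 normr_eq0 (gt_eqF (pw i)) orbF.
by move/eqP.
Qed.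

Lemma cap_exists (A B : 'M[R]_n) (w : 'cV[R]_n) (U : {set 'I_n}) (b : 'cV[R]_n) :
  nonneg_mx A -> (forall i j, 0 < A i j -> 0 < B i j) -> irreducible_mx A ->
  nonneg_mx B -> pos_vec w -> B *m w = w -> U != set0 ->
  exists q, cap_vec B w U b q.
Proof.
move=> nnA AB irrA nnB pw Bw U0.
pose M : 'M[R]_n := \matrix_(i, j) if i \in U then (1%:M : 'M[R]_n) i j
                                   else (1%:M - B) i j.
have Mq (q : 'cV[R]_n) i : (M *m q) i 0 = if i \in U then q i 0 else ((1%:M - B) *m q) i 0.
  case: ifP => Hi.
    rewrite -[in RHS](mul1mx q) !mxE; apply: eq_bigr => j _; by rewrite mxE Hi.
  rewrite !mxE; apply: eq_bigr => j _; by rewrite mxE Hi.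
have Mu : M \in unitmx.
  rewrite unitmxE unitfE -det_tr; apply/negP => /det0P [v vn0 vM].
  have : (v^T = 0).
    apply: (kernel0 _ _ _ _ _ nnA AB irrA nnB pw Bw U0).
      move=> i Hi; have := congr1 (fun X : 'rV[R]_n => X^T i 0) vM.
      by rewrite trmx_mul trmxK Mq Hi => ->; rewrite !mxE.
    move=> i Hi; have := congr1 (fun X : 'rV[R]_n => X^T i 0) vM.
    by rewrite trmx_mul trmxK Mq (negbTE Hi) => ->; rewrite !mxE.
  by move/(congr1 (fun X : 'cV[R]_n => X^T)); rewrite trmxK trmx0 => vz; rewrite vz eqxx in vn0.
pose c : 'cV[R]_n := \col_i (if i \in U then w i 0 * b i 0 else 0).
exists (invmx M *m c).
have Mc : M *m (invmx M *m c) = c by rewrite mulmxA mulmxV // mul1mx.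
split.
  by move=> i Hi; have := congr1 (fun X : 'cV[R]_n => X i 0) Mc; rewrite Mq Hi => ->; rewrite mxE Hi.
by move=> i Hi; have := congr1 (fun X : 'cV[R]_n => X i 0) Mc; rewrite Mq (negbTE Hi) => ->; rewrite mxE (negbTE Hi).
Qed.


Lemma capE (B : 'M[R]_n) (x : 'cV[R]_n) :
  cap_value B x = (x^T *m ((1%:M - B) *m x)) 0 0.
Proof. by rewrite /cap_value mxE; apply: eq_bigr => i _; rewrite [x^T 0 i]mxE. Qed.

Lemma trsym (L : 'M[R]_n) (u v : 'cV[R]_n) :
  (u^T *m (L^T *m v)) 0 0 = (v^T *m (L *m u)) 0 0.
Proof.
transitivity (((v^T *m (L *m u))^T) 0 0); last by rewrite mxE.
by rewrite !trmx_mul trmxK mulmxA.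
Qed.

Lemma half_double (m p : nat) (X : 'M[R]_(m, p)) : 2^-1 *: (X + X) = X.
Proof.
by rewrite -mulr2n -scaler_nat scalerA mulVf ?scale1r // pnatr_eq0.
Qed.

Lemma entryD (X Y : 'M[R]_1) : (X + Y) 0 0 = X 0 0 + Y 0 0.
Proof. by rewrite mxE. Qed.

Lemma cap_sym (A : 'M[R]_n) (x : 'cV[R]_n) :
  cap_value (sym_part A) x = cap_value A x.
Proof.
rewrite !capE /sym_part.
have h : x^T *m (A^T *m x) = x^T *m (A *m x).
  by rewrite [LHS]mx11_scalar [RHS]mx11_scalar trsym.
rewrite !mulmxBl !mul1mx !mulmxBr -scalemxAl mulmxDl -scalemxAr mulmxDr h.
by rewrite half_double.
Qed.

Lemma cap_ge0 (A : 'M[R]_n) (w x : 'cV[R]_n) : nonneg_mx A -> pos_vec w ->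
  A *m w = w -> A^T *m w = w -> 0 <= cap_value A x.
Proof.
move=> nnA pw Aw ATw.
pose y i := x i 0 / w i 0.
have xE i : x i 0 = w i 0 * y i by rewrite /y mulrC divfK // lt0r_neq0.
have e1 : cap_value A x = \sum_i x i 0 ^+ 2
    - \sum_i \sum_j A i j * (w i 0 * w j 0) * (y i * y j).
  rewrite /cap_value -sumrB; apply: eq_bigr => i _.
  rewrite mulmxBl mul1mx !mxE mulrBr mulr_sumr expr2; congr (_ - _).
  by apply: eq_bigr => j _; rewrite !xE; ring.
have s1 : \sum_i \sum_j A i j * (w i 0 * w j 0) * y i ^+ 2 = \sum_i x i 0 ^+ 2.
  apply: eq_bigr => i _.
  have := congr1 (fun X : 'cV[R]_n => X i 0) Aw; rewrite mxE => Awi.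
  rewrite xE; transitivity (w i 0 * (\sum_j A i j * w j 0) * y i ^+ 2).
    by rewrite mulr_sumr mulr_suml; apply: eq_bigr => j _; ring.
  by rewrite Awi; ring.
have s2 : \sum_i \sum_j A i j * (w i 0 * w j 0) * y j ^+ 2 = \sum_i x i 0 ^+ 2.
  rewrite exchange_big; apply: eq_bigr => j _.
  have := congr1 (fun X : 'cV[R]_n => X j 0) ATw; rewrite mxE => Awj.
  rewrite xE; transitivity (w j 0 * (\sum_i A^T j i * w i 0) * y j ^+ 2).
    by rewrite mulr_sumr mulr_suml; apply: eq_bigr => i _; rewrite mxE; ring.
  by rewrite Awj; ring.
have key : 2 * cap_value A x =
    \sum_i \sum_j A i j * (w i 0 * w j 0) * (y i - y j) ^+ 2.
  transitivity (\sum_i \sum_j (A i j * (w i 0 * w j 0) * y i ^+ 2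
     + A i j * (w i 0 * w j 0) * y j ^+ 2
     - 2 * (A i j * (w i 0 * w j 0) * (y i * y j)))); last first.
    by apply: eq_bigr => i _; apply: eq_bigr => j _; ring.
  under eq_bigr => i _ do rewrite sumrB big_split /= -mulr_sumr.
  rewrite sumrB big_split /= -mulr_sumr s1 s2 e1; ring.
have : 0 <= 2 * cap_value A x.
  rewrite key; apply: sumr_ge0 => i _; apply: sumr_ge0 => j _.
  apply: mulr_ge0; last exact: sqr_ge0.
  by apply: mulr_ge0; [exact: nnA | apply: mulr_ge0; exact: ltW (pw _)].
by rewrite pmulr_rge0.
Qed.

Lemma trD (u v : 'cV[R]_n) : (u + v)^T = u^T + v^T.
Proof. by apply/matrixP => i j; rewrite !mxE. Qed.

Lemma quad_split (L : 'M[R]_n) (qs d : 'cV[R]_n) :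
  (d^T *m (L *m qs)) 0 0 = 0 -> (qs^T *m (L *m d)) 0 0 = 0 ->
  0 <= (d^T *m (L *m d)) 0 0 ->
  (qs^T *m (L *m qs)) 0 0 <= ((qs + d)^T *m (L *m (qs + d))) 0 0.
Proof.
move=> c1 c2 dd.
rewrite mulmxDr trD mulmxDl !mulmxDr !entryD c1 c2.
by rewrite addr0 add0r lerDl.
Qed.

End Cap.

Theorem lemma5p23 (R : rcfType) (n : nat) (A : 'M[R]_n) (w : 'cV[R]_n) :
  nonneg_mx A -> irreducible_mx A -> PF_eigenvalue_one A ->
  pos_vec w -> A *m w = w -> A^T *m w = w ->
  forall (U : {set 'I_n}) (b : 'cV[R]_n),
    U != set0 -> U != setT ->
    (exists q, cap_vec A w U b q) /\
    (exists q, cap_vec (sym_part A) w U b q) /\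
    (forall q qs, cap_vec A w U b q -> cap_vec (sym_part A) w U b qs ->
       cap_value (sym_part A) qs <= cap_value A q).
Proof.
move=> nnA irrA _ pw Aw ATw U b U0 _.
have AsW : sym_part A *m w = w.
  by rewrite /sym_part -scalemxAl mulmxDl Aw ATw half_double.
have nnAs : nonneg_mx (sym_part A).
  move=> i j; rewrite !mxE; apply: mulr_ge0; first by rewrite invr_ge0.
  by rewrite addr_ge0 ?nnA.
have AB : forall i j, 0 < A i j -> 0 < sym_part A i j.
  move=> i j Aij; rewrite !mxE; apply: mulr_gt0; first by rewrite invr_gt0.
  by apply: ltr_wpDr; [exact: nnA | exact: Aij].
split; first exact: (@cap_exists R n A _ w U b nnA (fun i j h => h) irrA nnA pw Aw U0).
split; first exact: (@cap_exists R n A _ w U b nnA AB irrA nnAs pw AsW U0).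
move=> q qs [qU qW] [qsU qsW].
rewrite -(@cap_sym R n A q).
pose d := q - qs.
have qE : q = qs + d by rewrite /d addrC subrK.
have dU i : i \in U -> d i 0 = 0 by move=> Hi; rewrite /d !mxE qU ?qsU // subrr.
clearbody d.
have Ls_sym : (1%:M - sym_part A)^T = 1%:M - sym_part A.
  rewrite /sym_part linearB /= trmx1 linearZ /= linearD /= trmxK.
  by rewrite [A^T + A]addrC.
have cross : (d^T *m ((1%:M - sym_part A) *m qs)) 0 0 = 0.
  rewrite mxE; apply: big1 => i _.
  case: (boolP (i \in U)) => Hi.
    have -> : d^T 0 i = 0 by rewrite mxE dU.
    by rewrite mul0r.
  by rewrite qsW // mulr0.
have cross2 : (qs^T *m ((1%:M - sym_part A) *m d)) 0 0 = 0.
  by rewrite -{1}Ls_sym trsym cross.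
have dd := @cap_ge0 R n A w d nnA pw Aw ATw.
rewrite -(@cap_sym R n A d) capE in dd.
rewrite [cap_value _ q]capE qE capE.
exact: quad_split cross cross2 dd.
Qed.
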